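(* For every integer $n\ge 5$, $\mathrm{mob}(K(n,2))=\max\left\{4,\left\lfloor \frac{n-3}{2}\right\rfloor\right\}$.
   Context: The Kneser graph $K(n,2)$ has as vertices all $2$-element subsets of $\{1,\dots,n\}$, two vertices being adjacent iff the subsets are disjoint. A set $S$ of vertices is a general position set if no three distinct vertices of $S$ lie on a common shortest path. Place one robot on each vertex of a general position set $S$; robots move one at a time, and a move is legal if a robot moves to an adjacent unoccupied vertex and the new set of occupied vertices is again a general position set. $S$ is a mobile general position set if some finite sequence of legal moves results in every vertex being occupied by some robot at some moment. $\mathrm{mob}$ of a graph is the maximum cardinality of a mobile general position set of it. *)

(* Defs.v *)
From mathcomp Require Import all_boot.
Set Implicit Arguments. Unset Strict Implicit. Unset Printing Implicit Defensive.

Section GraphDefs.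
Variables (T : finType) (e : rel T).

Definition shortest_path (x : T) (p : seq T) : Prop :=
  path e x p /\
  forall q : seq T, path e x q -> last x q = last x p -> size p <= size q.

Definition on_common_geodesic (u v w : T) : Prop :=
  exists x p, shortest_path x p /\ [/\ u \in x :: p, v \in x :: p & w \in x :: p].

Definition gp_set (S : {set T}) : Prop :=
  forall u v w, u \in S -> v \in S -> w \in S ->
    u != v -> v != w -> u != w -> ~ on_common_geodesic u v w.

Definition legal_move (S S' : {set T}) : Prop :=
  exists u v, [/\ u \in S, v \notin S, e u v, S' = v |: (S :\ u) & gp_set S'].

Definition mobile_gp_set (S : {set T}) : Prop :=
  gp_set S /\
  exists (k : nat) (C : nat -> {set T}),
    [/\ C 0 = S,
        (forall i, i < k -> legal_move (C i) (C i.+1)) &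
        (forall x : T, exists2 i, i <= k & x \in C i)].

Definition is_mob (m : nat) : Prop :=
  (exists S : {set T}, mobile_gp_set S /\ #|S| = m) /\
  (forall S : {set T}, mobile_gp_set S -> #|S| <= m).

End GraphDefs.

Definition kneser_vertex (n : nat) := {A : {set 'I_n} | #|A| == 2}.

Definition kneser_adj (n : nat) : rel (kneser_vertex n) :=
  fun u v => [disjoint val u & val v].

(* Main.v *)
Require Import Defs.
From mathcomp Require Import all_boot zify.
Set Implicit Arguments. Unset Strict Implicit. Unset Printing Implicit Defensive.

Lemma djP (T : finType) (A B : {set T}) :
  reflect (forall x, x \in A -> x \in B -> False) [disjoint A & B].
Proof.
rewrite disjoints_subset; apply: (iffP subsetP) => H x.
  by move=> /H; rewrite inE => /negP.
by move=> xA; rewrite inE; apply/negP => /(H x xA).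
Qed.

Lemma meetP (T : finType) (A B : {set T}) :
  reflect (exists2 x, x \in A & x \in B) (~~ [disjoint A & B]).
Proof.
apply: (iffP idP).
  move=> H; case: (set_0Vmem (A :&: B)) => [E|[x]].
    by move: H; rewrite -setI_eq0 E eqxx.
  by rewrite inE => /andP[xA xB]; exists x.
by case=> x xA xB; apply/negP => /djP /(_ x xA xB).
Qed.

Lemma two_elems (T : finType) (A : {set T}) : 1 < #|A| ->
  exists a b, [/\ a != b, a \in A & b \in A].
Proof.
move=> h; have : 0 < #|A| by apply: leq_trans h.
move/card_gt0P => [a aA].
have : 0 < #|A :\ a| by move: h; rewrite (cardsD1 a A) aA.
move/card_gt0P => [b]; rewrite !inE => /andP[ba bA].
by exists a, b; rewrite eq_sym ba.
Qed.

Lemma set2_eq (T : finType) (A : {set T}) x y : #|A| = 2 -> x != y ->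
  x \in A -> y \in A -> A = [set x; y].
Proof.
move=> cA xy xA yA; apply/eqP; rewrite eq_sym eqEcard subUset !sub1set xA yA.
by rewrite cards2 xy cA.
Qed.

Lemma le1_uniq (T : finType) (A : {set T}) :
  (forall a b, a \in A -> b \in A -> a = b) -> #|A| <= 1.
Proof.
move=> H; case: (set_0Vmem A) => [->|[a aA]]; first by rewrite cards0.
have : A \subset [set a] by apply/subsetP => b bA; rewrite inE (H b a bA aA).
by move/subset_leq_card; rewrite cards1.
Qed.

Lemma cardD1E (T : finType) (A : {set T}) a : a \in A -> #|A :\ a| = #|A| - 1.
Proof. by move=> aA; rewrite (cardsD1 a A) aA add1n subSS subn0. Qed.

Section K.
Variable n : nat.
Hypothesis n5 : 5 <= n.
Local Notation V := (kneser_vertex n).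
Local Notation e := (@kneser_adj n).

Lemma cardV (v : V) : #|val v| = 2.
Proof. by case: v => A /= /eqP. Qed.

Lemma ex_v (a b : 'I_n) : a != b -> {v : V | val v = [set a; b]}.
Proof.
move=> h; have P : #|[set a; b]| == 2 by rewrite cards2 h.
by exists (exist (fun A : {set 'I_n} => #|A| == 2) _ P).
Qed.

Lemma val2 (v : V) : exists a b, a != b /\ val v = [set a; b].
Proof. have /cards2P [a [b [ab E]]] : #|val v| == 2 by rewrite cardV.
by exists a, b. Qed.

Lemma e_sym (u v : V) : e u v = e v u.
Proof. by rewrite /kneser_adj disjoint_sym. Qed.

Lemma e_irr (v : V) : e v v = false.
Proof.
apply/negP => /djP H; have [a [b [_ E]]] := val2 v.
by apply: (H a); rewrite E !inE eqxx.
Qed.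

Lemma e_neq (u v : V) : e u v -> u != v.
Proof. by apply: contraTneq => ->; rewrite e_irr. Qed.

Lemma veq (u v : V) x y : x != y -> x \in val u -> y \in val u ->
  x \in val v -> y \in val v -> u = v.
Proof.
move=> xy xu yu xv yv; apply: val_inj.
by rewrite (set2_eq (cardV u) xy xu yu) (set2_eq (cardV v) xy xv yv).
Qed.

Lemma vin (A : {set 'I_n}) : 1 < #|A| -> exists v : V, val v \subset A.
Proof.
move=> /two_elems [a [b [ab aA bA]]]; have [v hv] := ex_v ab.
by exists v; rewrite hv subUset !sub1set aA bA.
Qed.

Lemma diam (x y : V) : exists q, [/\ path e x q, last x q = y & size q <= 2].
Proof.
have [<-|xy] := eqVneq x y; first by exists [::].
case exy: (e x y); first by exists [:: y]; rewrite /= exy.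
have /meetP [z zx zy] : ~~ e x y by rewrite exy.
have h3 : #|val x :|: val y| <= 3.
  rewrite cardsU !cardV.
  have : 0 < #|val x :&: val y| by apply/card_gt0P; exists z; rewrite inE zx zy.
  lia.
have : 1 < #|~: (val x :|: val y)|.
  have := cardsC (val x :|: val y); rewrite card_ord; lia.
move=> /vin [w hw].
have ewx : e w x.
  apply/djP => a /(subsetP hw); rewrite !inE => /norP[/negP h _]; exact: h.
have ewy : e w y.
  apply/djP => a /(subsetP hw); rewrite !inE => /norP[_ /negP h]; exact: h.
by exists [:: w; y]; rewrite /= e_sym ewx ewy.
Qed.


Definition badmid (a b c : V) := [/\ e b a, e b c & ~~ e a c].

Lemma gp_crit (S : {set V}) :
  (forall a b c, a \in S -> b \in S -> c \in S -> a != c -> ~ badmid a b c) ->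
  gp_set e S.
Proof.
move=> H u v w uS vS wS uv vw uw [x [p [[hp hmin] [hu hv hw]]]].
have [q [hq hl hs]] := diam x (last x p).
have sp := leq_trans (hmin q hq hl) hs.
clear hl hq hs q.
case: p hp hmin hu hv hw sp => [|y [|z [|? ?]]] //= hp hmin hu hv hw _.
- by rewrite !inE in hu hv; rewrite (eqP hu) (eqP hv) eqxx in uv.
- rewrite !inE in hu hv hw.
  by case/orP: hu => /eqP Hu; case/orP: hv => /eqP Hv; case/orP: hw => /eqP Hw;
    rewrite Hu Hv Hw ?eqxx in uv vw uw.
- have xz : x != z.
    apply/eqP => xz; have := hmin [::] isT; rewrite /= xz => /(_ erefl).
    by [].
  have nxz : ~~ e x z.
    apply/negP => exz; have := hmin [:: z]; rewrite /= exz => /(_ isT erefl).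
    by [].
  move: hp => /and3P [exy eyz _].
  have bm : badmid x y z by split => //; rewrite e_sym.
  rewrite !inE in hu hv hw.
  case/or3P: hu => /eqP Hu; case/or3P: hv => /eqP Hv; case/or3P: hw => /eqP Hw;
    rewrite Hu Hv Hw ?eqxx in uS vS wS uv vw uw => //; exact: (H x y z).
Qed.

Lemma gp_bad (S : {set V}) a b c : gp_set e S -> a \in S -> b \in S -> c \in S ->
  a != c -> badmid a b c -> False.
Proof.
move=> G aS bS cS ac [eba ebc nac].
apply: (G a b c aS bS cS _ _ ac).
- by rewrite eq_sym; apply: e_neq.
- exact: e_neq.
exists a, [:: b; c]; split; last by rewrite !inE !eqxx ?orbT.
split; first by rewrite /= e_sym eba ebc.
case=> [|c' [|? ?]] //= hq hl.
- by rewrite hl eqxx in ac.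
- by move: hq; rewrite hl (negbTE nac).
Qed.


Definition walk (S T : {set V}) k (C : nat -> {set V}) :=
  [/\ C 0 = S, C k = T & forall i, i < k -> legal_move e (C i) (C i.+1)].
Definition reach S T := exists k C, walk S T k C.

Lemma legal_rev C C' : gp_set e C -> legal_move e C C' -> legal_move e C' C.
Proof.
move=> gC [u [v [uC vC euv -> gC']]].
have uv := e_neq euv.
exists v, u; split => //.
- by rewrite !inE eqxx.
- by rewrite !inE eqxx /=; apply/norP; split => //; rewrite eq_sym.
- by rewrite e_sym.
apply/setP => x; rewrite !inE.
have [->|xu] := eqVneq x u; first by rewrite uC.
have [->|xv] := eqVneq x v; first by rewrite (negbTE vC).
by [].
Qed.

Lemma walk_gp S T k C : gp_set e S -> walk S T k C -> forall i, i <= k -> gp_set e (C i).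
Proof.
move=> gS [C0 _ HC]; elim=> [|i IH] hi; first by rewrite C0.
by have [? [? [_ _ _ _ ?]]] := HC i hi.
Qed.

Lemma reach_rev S T : gp_set e S -> reach S T -> reach T S.
Proof.
move=> gS [k [C [C0 Ck HC]]].
exists k, (fun i => C (k - i)); split; first by rewrite subn0.
  by rewrite subnn.
move=> i ik.
have E : k - i = (k - i.+1).+1 by lia.
rewrite E; apply: legal_rev; last by apply: HC; lia.
apply: (walk_gp gS (And3 C0 Ck HC)); lia.
Qed.

Definition catw k1 (C1 C2 : nat -> {set V}) :=
  fun i => if i <= k1 then C1 i else C2 (i - k1).

Lemma catw1 k1 C1 C2 i : i <= k1 -> catw k1 C1 C2 i = C1 i.
Proof. by rewrite /catw => ->. Qed.

Lemma catw2 k1 C1 C2 i : C1 k1 = C2 0 -> k1 <= i -> catw k1 C1 C2 i = C2 (i - k1).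
Proof.
rewrite /catw => E h; case: ifP => // h2.
have -> : i = k1 by lia.
by rewrite subnn.
Qed.

Lemma walk_cat S T U k1 k2 C1 C2 : walk S T k1 C1 -> walk T U k2 C2 ->
  walk S U (k1 + k2) (catw k1 C1 C2).
Proof.
move=> [A1 B1 H1] [A2 B2 H2]; have E : C1 k1 = C2 0 by rewrite B1 A2.
split.
- by rewrite catw1.
- by rewrite (catw2 E (leq_addr k2 k1)) addKn.
move=> i ik; have [lt|ge] := ltnP i k1.
  by rewrite !catw1 //; [apply: H1 | apply: ltnW].
rewrite !catw2 //; last by apply: leqW.
have -> : i.+1 - k1 = (i - k1).+1 by lia.
by apply: H2; lia.
Qed.

Lemma reach_trans S T U : reach S T -> reach T U -> reach S U.
Proof.
by move=> [k1 [C1 w1]] [k2 [C2 w2]]; exists (k1 + k2), (catw k1 C1 C2); exact: (walk_cat w1 w2).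
Qed.

Lemma reach_refl S : reach S S.
Proof. by exists 0, (fun _ => S). Qed.

Lemma reach_step S T : legal_move e S T -> reach S T.
Proof.
move=> h; exists 1, (fun i => if i is 0 then S else T); split => //.
by case.
Qed.

Lemma mobile_of_reach S : gp_set e S ->
  (forall x, exists T, reach S T /\ x \in T) -> mobile_gp_set e S.
Proof.
move=> gS H; split => //.
suff : forall l : seq V, exists k C, walk S S k C /\
   forall x, x \in l -> exists2 i, i <= k & x \in C i.
  case/(_ (enum [set: V])) => k [C [[C0 _ HC] Hl]]; exists k, C; split => // x.
  by apply: Hl; rewrite mem_enum inE.
elim=> [|x l [k [C [w Hl]]]].
  by exists 0, (fun _ => S); split => //; split.
have [T [[k1 [C1 w1]] xT]] := H x.
have [k2 [C2 w2]] := reach_rev gS (ex_intro _ k1 (ex_intro _ C1 w1)).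
have w12 := walk_cat w1 w2.
have w3 := walk_cat w12 w.
exists (k1 + k2 + k), (catw (k1 + k2) (catw k1 C1 C2) C); split => // y.
have [_ E4 _] := w12; have [E5 _ _] := w.
have E : catw k1 C1 C2 (k1 + k2) = C 0 by rewrite E4 E5.
rewrite inE => /orP[/eqP ->|yl].
  have [_ Tk _] := w1.
  exists k1; first by lia.
  by rewrite catw1 ?catw1 ?Tk // leq_addr.
have [i ik yi] := Hl y yl.
exists (k1 + k2 + i); first by lia.
by rewrite (catw2 E) ?addKn // leq_addr.
Qed.


Definition matching (C : {set V}) :=
  forall a b, a \in C -> b \in C -> a != b -> e a b.

Lemma matching_gp (C : {set V}) : matching C -> gp_set e C.
Proof.
move=> M; apply: gp_crit => a b c aC bC cC ac [_ _].
by rewrite (M a c aC cC ac).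
Qed.

Definition cov (C : {set V}) := \bigcup_(v in C) val v.

Lemma in_cov (C : {set V}) (v : V) (x : 'I_n) : v \in C -> x \in val v -> x \in cov C.
Proof. by move=> vC xv; apply/bigcupP; exists v. Qed.

Lemma covP (C : {set V}) (x : 'I_n) : x \in cov C -> exists2 v, v \in C & x \in val v.
Proof. by move/bigcupP. Qed.

Lemma cov_card (C : {set V}) : matching C -> #|cov C| = 2 * #|C|.
Proof.
move=> M; rewrite -(card_imset (mem C) val_inj) mulnC.
apply: card_uniform_partition.
  by move=> A /imsetP [v _ ->]; exact: cardV.
rewrite /partition cover_imset eqxx /=; apply/andP; split.
  apply/trivIsetP => A B /imsetP[a aC ->] /imsetP[b bC ->] ab.
  by apply: M => //; apply: contraNneq ab => ->.
apply/imsetP => [[v _ E]]; have := cardV v; rewrite /= -E cards0.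
by [].
Qed.

Lemma match_move (C : {set V}) (u v : V) : matching C -> u \in C ->
  (forall x, x \in val v -> x \notin cov C) ->
  [/\ legal_move e C (v |: (C :\ u)), matching (v |: (C :\ u)) &
      #|v |: (C :\ u)| = #|C|].
Proof.
move=> M uC hv.
have ewv : forall w, w \in C -> e w v.
  move=> w wC; apply/djP => x xw xv.
  by have := hv x xv; rewrite (in_cov wC xw).
have vC : v \notin C.
  apply/negP => vC; have [a [b [_ E]]] := val2 v.
  have : a \in val v by rewrite E !inE eqxx.
  by move=> av; have := hv a av; rewrite (in_cov vC av).
have MC : matching (v |: (C :\ u)).
  move=> a b; rewrite !inE => /orP[/eqP ->|/andP[_ aC]] /orP[/eqP ->|/andP[_ bC]].
  - by rewrite eqxx.
  - by move=> _; rewrite e_sym; apply: ewv.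
  - by move=> _; apply: ewv.
  - by apply: M.
split => //.
  exists u, v; split => //; first exact: ewv.
  exact: matching_gp.
by rewrite cardsU1 (cardsD1 u C) uC !inE (negbTE vC) andbF.
Qed.

Lemma match_step (C : {set V}) (y z : 'I_n) : matching C -> 2 * #|C| + 3 <= n -> y \in cov C ->
  exists C', [/\ legal_move e C C', matching C', #|C'| = #|C|, y \notin cov C' &
     (z \notin cov C -> z \notin cov C')].
Proof.
move=> M hk /covP [u uC yu].
have hF : 1 < #|~: cov C :\ z|.
  have := cardsC (cov C); rewrite card_ord cov_card // => h.
  rewrite (cardsD1 z (~: cov C)) in h; case: (z \in ~: cov C) h => /= h; move: hk h; set c := #|C|; set d := #|_ :\ z|; clearbody c d; lia.
have [v hv] := vin hF.
have hv' : forall x, x \in val v -> x \notin cov C /\ x != z.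
  by move=> x /(subsetP hv); rewrite !inE => /andP[-> ->].
have [L MC cC] := match_move M uC (fun x xv => proj1 (hv' x xv)).
exists (v |: (C :\ u)); split => //.
  apply/negP => /covP [w wC' yw]; move: wC'; rewrite !inE.
  case/orP => [/eqP E|/andP[wu wC]].
    by rewrite E in yw; have [h _] := hv' y yw; rewrite (in_cov uC yu) in h.
  by have /djP H := M w u wC uC wu; exact: (H y yw yu).
move=> zC; apply/negP => /covP [w wC' zw]; move: wC'; rewrite !inE.
case/orP => [/eqP E|/andP[wu wC]].
  by rewrite E in zw; have [_] := hv' z zw; rewrite eqxx.
by move: zC; rewrite (in_cov wC zw).
Qed.

Lemma match_cover (C : {set V}) : matching C -> 0 < #|C| -> 2 * #|C| + 3 <= n ->
  forall t : V, exists T, reach C T /\ t \in T.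
Proof.
move=> M k0 hk t; have [a [b [ab E]]] := val2 t.
have [C1 [r1 M1 k1 a1 b1]] : exists C1, [/\ reach C C1, matching C1, #|C1| = #|C|,
    a \notin cov C1 & (b \notin cov C -> b \notin cov C1)].
  case aC: (a \in cov C); last by exists C; split => //; [apply: reach_refl | rewrite aC].
  have [C' [L M' k' a' b']] := match_step b M hk aC.
  by exists C'; split => //; apply: reach_step.
have [C2 [r2 M2 k2 a2 b2]] : exists C2, [/\ reach C1 C2, matching C2, #|C2| = #|C|,
    a \notin cov C2 & b \notin cov C2].
  case bC: (b \in cov C1); last by exists C1; split => //; [apply: reach_refl | rewrite bC].
  have hk1 : 2 * #|C1| + 3 <= n by rewrite k1.
  have [C' [L M' k' a' b']] := match_step a M1 hk1 bC.
  by exists C'; split => //; [apply: reach_step | rewrite k' | apply: b'].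
have /card_gt0P [u uC2] : 0 < #|C2| by rewrite k2.
have hv : forall x, x \in val t -> x \notin cov C2.
  by move=> x; rewrite E !inE => /orP[] /eqP ->.
have [L _ _] := match_move M2 uC2 hv.
exists (t |: (C2 :\ u)); split; last by rewrite !inE eqxx.
apply: reach_trans r1 (reach_trans r2 (reach_step L)).
Qed.


Lemma ex_matching k : 2 * k <= n -> exists S : {set V},
  [/\ matching S, #|S| = k & forall v x, v \in S -> x \in val v -> x < 2 * k].
Proof.
elim: k => [|k IH] hk.
  by exists set0; split; [move=> ? ?; rewrite inE | exact: cards0 | move=> ? ?; rewrite inE].
have hk' : 2 * k <= n by lia.
have [S [M cS bS]] := IH hk'.
have ha : 2 * k < n by lia.
have hb : (2 * k).+1 < n by lia.
pose a := Ordinal ha; pose b := Ordinal hb.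
have ab : a != b by rewrite -val_eqE /=; apply/eqP; lia.
have [v hv] := ex_v ab.
have ev : forall w, w \in S -> e w v.
  move=> w wS; apply/djP => x xw; rewrite hv !inE => /orP[] /eqP xe;
  have := bS w x wS xw; rewrite xe /=; lia.
have vS : v \notin S.
  apply/negP => vS; have : a \in val v by rewrite hv !inE eqxx.
  by move=> /(bS v a vS); rewrite /= ltnn.
exists (v |: S); split.
- move=> x y; rewrite !inE => /orP[/eqP ->|xS] /orP[/eqP ->|yS].
  + by rewrite eqxx.
  + by move=> _; rewrite e_sym; apply: ev.
  + by move=> _; apply: ev.
  + by apply: M.
- by rewrite cardsU1 vS cS.
move=> w x; rewrite !inE => /orP[/eqP ->|wS].
  rewrite hv !inE => /orP[] /eqP -> /=; lia.
move=> xw; have := bS w x wS xw; lia.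
Qed.

Lemma mobile_matching k : 0 < k -> 2 * k + 3 <= n ->
  exists S : {set V}, mobile_gp_set e S /\ #|S| = k.
Proof.
move=> k0 hk; have hk2 : 2 * k <= n by lia.
have [S [M cS _]] := ex_matching hk2.
exists S; split => //; apply: mobile_of_reach; first exact: matching_gp.
by apply: match_cover => //; rewrite cS.
Qed.


Lemma common_gp (S : {set V}) x : (forall v, v \in S -> x \in val v) -> gp_set e S.
Proof.
move=> H; apply: gp_crit => a b c aS bS cS _ [/djP eba _ _].
exact: (eba x (H b bS) (H a aS)).
Qed.

Lemma other (v : V) x : x \in val v -> exists y, y != x /\ val v = [set x; y].
Proof.
have [p [q [pq E]]] := val2 v; rewrite E !inE => /orP[] /eqP ->.
  by exists q; rewrite eq_sym.
by exists p; rewrite setUC.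
Qed.

Definition starS (x : 'I_n) (L : {set 'I_n}) :=
  [set v : V | (x \in val v) && (val v \subset x |: L)].

Lemma starP (x : 'I_n) (L : {set 'I_n}) (t : V) : x \notin L ->
  reflect (exists2 y, y \in L & val t = [set x; y]) (t \in starS x L).
Proof.
move=> xL; rewrite inE; apply: (iffP andP).
  case=> /other [y [yx E]] sub; exists y => //.
  have : y \in val t by rewrite E !inE eqxx orbT.
  by move/(subsetP sub); rewrite !inE (negbTE yx).
case=> y yL E; rewrite E !inE eqxx; split => //.
by rewrite subUset !sub1set !inE eqxx yL orbT.
Qed.

Lemma star_x (x : 'I_n) (L : {set 'I_n}) (t : V) : t \in starS x L -> x \in val t.
Proof. by rewrite inE => /andP[]. Qed.

Lemma star_ne (x : 'I_n) (L : {set 'I_n}) (t1 t2 : V) :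
  t1 \in starS x L -> t2 \in starS x L -> e t1 t2 = false.
Proof.
move=> /star_x h1 /star_x h2; apply/negP => /djP H; exact: (H x h1 h2).
Qed.

Lemma star_gp (x : 'I_n) (L : {set 'I_n}) : gp_set e (starS x L).
Proof. by apply: (common_gp (x := x)) => v; apply: star_x. Qed.

Lemma star_paw (x : 'I_n) (L : {set 'I_n}) b c d (u w : V) : x \notin L -> #|L| = 4 ->
  b \in L -> c \in L -> d \in L -> b != c -> b != d -> c != d ->
  val u = [set x; d] -> val w = [set b; c] ->
  legal_move e (starS x L) (w |: (starS x L :\ u)).
Proof.
move=> xL cL bL cL' dL bc bd cd hu hw.
have xb : x != b by apply: contraNneq xL => ->.
have xc : x != c by apply: contraNneq xL => ->.
have xd : x != d by apply: contraNneq xL => ->.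
exists u, w; split => //.
- by apply/starP => //; exists d.
- by apply/negP => /star_x; rewrite hw !inE (negbTE xb) (negbTE xc).
- apply/djP => z; rewrite hu hw !inE => /orP[] /eqP -> /orP[] /eqP E;
  by move: xb xc bd cd; rewrite E eqxx ?(eq_sym d) ?andbF.
have hc1 : #|L :\ d :\ b :\ c| <= 1.
  rewrite !cardD1E ?cL // !inE ?dL ?bL ?cL' ?bd ?cd ?(eq_sym c b) ?bc //.
have hy : forall t, t \in starS x L -> t != u -> e w t ->
    exists2 y, y \in L :\ d :\ b :\ c & val t = [set x; y].
  move=> t tS tu /djP ewt; have [y yL Et] := starP _ xL tS.
  exists y => //; rewrite !inE yL andbT.
  have yt : y \in val t by rewrite Et !inE eqxx orbT.
  apply/and3P; split.
  - by apply/eqP => yc; apply: (ewt y) => //; rewrite hw yc !inE eqxx orbT.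
  - by apply/eqP => yb; apply: (ewt y) => //; rewrite hw yb !inE eqxx.
  - by apply: contraNneq tu => yd; apply/eqP/val_inj; rewrite Et hu yd.
apply: gp_crit => a1 b1 c1; rewrite !in_setU1 !in_setD1.
move=> /orP[/eqP ->|/andP[a1u a1S]] /orP[/eqP ->|/andP[b1u b1S]]
       /orP[/eqP ->|/andP[c1u c1S]] ac [eba ebc nac];
  rewrite ?eqxx ?e_irr in ac eba ebc nac => //;
  try (by move: eba; rewrite (star_ne (x:=x) (L:=L)));
  try (by move: ebc; rewrite (star_ne (x:=x) (L:=L))).
have [y1 y1L E1] := hy a1 a1S a1u eba.
have [y2 y2L E2] := hy c1 c1S c1u ebc.
move/card_le1_eqP: hc1 => /(_ y1 y2 y1L y2L) E.
by move: ac; rewrite -val_eqE E1 E2 E eqxx.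
Qed.


Lemma notin_neq (T : finType) (A : {set T}) a b : a \notin A -> b \in A -> a != b.
Proof. by move=> aA bA; apply: contraNneq aA => ->. Qed.

Lemma star_repl (x : 'I_n) (L : {set 'I_n}) d f : x \notin L -> #|L| = 4 ->
  d \in L -> f \notin L -> f != x ->
  reach (starS x L) (starS x (f |: (L :\ d))).
Proof.
move=> xL cL dL fL fx.
have : 1 < #|L :\ d| by rewrite cardD1E // cL.
move=> /two_elems [b [c [bc]]]; rewrite !in_setD1 => /andP[bd bL] /andP[cd cL'].
have xd := notin_neq xL dL; have xb := notin_neq xL bL; have xc := notin_neq xL cL'.
have [u hu] := ex_v xd; have [w hw] := ex_v bc.
have L1 := star_paw xL cL bL cL' dL bc bd cd hu hw.
rewrite eq_sym in fx; have [v2 hv2] := ex_v fx.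
have xL' : x \notin f |: (L :\ d) by rewrite in_setU1 in_setD1 negb_or fx (negbTE xL) andbF.
have QE : v2 |: ((w |: (starS x L :\ u)) :\ w) = starS x (f |: (L :\ d)).
  apply/setP => t; rewrite !(in_setU1, in_setD1).
  case: (t =P v2) => [->|tv2] /=.
    by apply/esym/starP => //; exists f; rewrite ?in_setU1 ?eqxx.
  case: (t =P w) => [->|tw] /=.
    apply/esym/negP => /star_x; rewrite hw !inE.
    by rewrite (negbTE xb) (negbTE xc).
  apply/idP/idP.
    move=> /andP[tu /(starP _ xL) [y yL Et]]; apply/starP => //; exists y => //.
    rewrite in_setU1 in_setD1 yL andbT; apply/orP; right.
    by apply: contraNneq tu => yd; apply/eqP/val_inj; rewrite Et hu yd.
  move=> /(starP _ xL') [y]; rewrite in_setU1 in_setD1 => /orP[/eqP yf|/andP[yd yL]] Et.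
    by case: tv2; apply/val_inj; rewrite Et hv2 yf.
  apply/andP; split; last by apply/starP => //; exists y.
  apply/eqP => tu; have : y \in val t by rewrite Et !inE eqxx orbT.
  by rewrite tu hu !inE (negbTE yd) eq_sym (negbTE (notin_neq xL yL)).
have L2 : legal_move e (w |: (starS x L :\ u)) (starS x (f |: (L :\ d))).
  rewrite -QE; exists w, v2; split.
  - by rewrite in_setU1 eqxx.
  - rewrite in_setU1 in_setD1 negb_or; apply/andP; split.
      apply/eqP => E; have : x \in val w by rewrite -E hv2 !inE eqxx.
      by rewrite hw !inE (negbTE xb) (negbTE xc).
    rewrite negb_and; apply/orP; right; apply/negP => /(starP _ xL) [y yL Et].
    have : f \in val v2 by rewrite hv2 !inE eqxx orbT.
    rewrite Et !inE eq_sym (negbTE fx) /= => /eqP fy; by rewrite fy yL in fL.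
  - have fb := notin_neq fL bL; have fc := notin_neq fL cL'.
    apply/djP => z; rewrite hw hv2 !inE => /orP[] /eqP -> /orP[] /eqP E;
    by move: xb xc fb fc; rewrite E eqxx ?andbF // eq_sym.
  - by [].
  - by rewrite QE; apply: star_gp.
exact: reach_trans (reach_step L1) (reach_step L2).
Qed.


Lemma star_add (x : 'I_n) (L : {set 'I_n}) p q : x \notin L -> #|L| = 4 ->
  q \notin L -> q != x -> q != p ->
  exists L' : {set 'I_n}, [/\ x \notin L', #|L'| = 4, q \in L', (p \in L -> p \in L') &
                 reach (starS x L) (starS x L')].
Proof.
move=> xL cL qL qx qp.
have : 0 < #|L :\ p|.
  by have := cardsD1 p L; rewrite cL; case: (p \in L) => /= h; lia.
move=> /card_gt0P [d]; rewrite in_setD1 => /andP[dp dL].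
exists (q |: (L :\ d)); split.
- by rewrite in_setU1 in_setD1 negb_or eq_sym qx (negbTE xL) andbF.
- by rewrite cardsU1 in_setD1 (negbTE qL) andbF cardD1E // cL.
- by rewrite in_setU1 eqxx.
- move=> pL; rewrite in_setU1 in_setD1 pL andbT; apply/orP; right; by rewrite eq_sym.
- exact: star_repl.
Qed.

Lemma star_cover (x : 'I_n) (L : {set 'I_n}) : x \notin L -> #|L| = 4 ->
  forall t : V, exists T, reach (starS x L) T /\ t \in T.
Proof.
move=> xL cL t; have [p [q [pq E]]] := val2 t.
have [L1 [xL1 cL1 pL1 qL1 r1]] : exists L1 : {set 'I_n}, [/\ x \notin L1, #|L1| = 4,
    p \in x |: L1, (q \in x |: L -> q \in x |: L1) & reach (starS x L) (starS x L1)].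
  case pL: (p \in x |: L); first by exists L; split => //; apply: reach_refl.
  move: pL; rewrite in_setU1 => /norP [px pL].
  have [L' [xL' cL' pL' qL' r']] := star_add (p:=q) xL cL pL px pq.
  exists L'; split => //; first by rewrite in_setU1 pL' orbT.
  by rewrite !in_setU1 => /orP[->|/qL' ->] //; rewrite orbT.
have [L2 [xL2 cL2 pL2 qL2 r2]] : exists L2 : {set 'I_n}, [/\ x \notin L2, #|L2| = 4,
    p \in x |: L2, q \in x |: L2 & reach (starS x L1) (starS x L2)].
  case qL: (q \in x |: L1); first by exists L1; split => //; apply: reach_refl.
  move: qL; rewrite in_setU1 => /norP [qx qL].
  have qp : q != p by rewrite eq_sym.
  have [L' [xL' cL' qL' pL' r']] := star_add (p:=p) xL1 cL1 qL qx qp.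
  exists L'; split => //; last by rewrite in_setU1 qL' orbT.
  by move: pL1; rewrite !in_setU1 => /orP[->|/pL' ->] //; rewrite orbT.
have r12 := reach_trans r1 r2.
move: pL2; rewrite in_setU1 => /orP[/eqP px|pL2].
  exists (starS x L2); split => //; apply/starP => //; exists q; last by rewrite E px.
  by move: qL2; rewrite in_setU1 -px eq_sym (negbTE pq).
move: qL2; rewrite in_setU1 => /orP[/eqP qx|qL2].
  exists (starS x L2); split => //; apply/starP => //; exists p => //.
  by rewrite E qx setUC.
have : 0 < #|L2 :\ p :\ q|.
  by rewrite cardD1E ?cardD1E ?cL2 // in_setD1 qL2 eq_sym pq.
move=> /card_gt0P [d]; rewrite !in_setD1 => /and3P[dq dp dL2].
have [u hu] := ex_v (notin_neq xL2 dL2).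
have pd : p != d by rewrite eq_sym.
have qd : q != d by rewrite eq_sym.
have L3 := star_paw xL2 cL2 pL2 qL2 dL2 pq pd qd hu E.
exists (t |: (starS x L2 :\ u)); split; last by rewrite in_setU1 eqxx.
exact: reach_trans r12 (reach_step L3).
Qed.


Lemma card_star (x : 'I_n) (L : {set 'I_n}) : x \notin L -> #|starS x L| = #|L|.
Proof.
move=> xL; pose g (t : V) := odflt x [pick y in val t :\ x].
have gE : forall t y, val t = [set x; y] -> y != x -> g t = y.
  move=> t y Et yx; rewrite /g; case: pickP => [z|/(_ y)] /=.
    by rewrite Et !inE => /andP[zx /orP[/eqP zx'|/eqP //]]; rewrite zx' eqxx in zx.
  by rewrite Et !inE yx eqxx orbT.
have gI : {in starS x L &, injective g}.
  move=> t1 t2 /(starP _ xL) [y1 y1L E1] /(starP _ xL) [y2 y2L E2].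
  have y1x : y1 != x by rewrite eq_sym (notin_neq xL y1L).
  have y2x : y2 != x by rewrite eq_sym (notin_neq xL y2L).
  by rewrite (gE _ _ E1 y1x) (gE _ _ E2 y2x) => y12; apply: val_inj; rewrite E1 E2 y12.
rewrite -(card_in_imset gI); suff -> : [set g t | t in starS x L] = L by [].
apply/setP => y; apply/imsetP/idP.
  case=> t /(starP _ xL) [y1 y1L E1] ->.
  by rewrite (gE _ _ E1) // eq_sym (notin_neq xL y1L).
move=> yL; have yx : y != x by rewrite eq_sym (notin_neq xL yL).
have [t Et] := ex_v (notin_neq xL yL).
exists t; first by apply/starP => //; exists y.
by rewrite (gE _ _ Et).
Qed.

Lemma mobile_star : exists S : {set V}, mobile_gp_set e S /\ #|S| = 4.
Proof.
have h0 : 0 < n by lia. have h1 : 1 < n by lia. have h2 : 2 < n by lia.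
have h3 : 3 < n by lia. have h4 : 4 < n by lia.
pose x := Ordinal h0; pose L := Ordinal h1 |: (Ordinal h2 |: (Ordinal h3 |: [set Ordinal h4])).
have xL : x \notin L by rewrite /L /x !inE -!val_eqE.
have cL : #|L| = 4 by rewrite /L !cardsU1 cards1 !inE -!val_eqE.
exists (starS x L); split; last by rewrite card_star.
apply: mobile_of_reach; first exact: star_gp.
exact: star_cover.
Qed.


Lemma legal_card (C C' : {set V}) : legal_move e C C' -> #|C'| = #|C|.
Proof.
case=> u [v [uC vC _ -> _]].
by rewrite cardsU1 (cardsD1 u C) uC !inE (negbTE vC) andbF.
Qed.

Lemma legal_sub (C C' : {set V}) u v : u \in C -> v \notin C -> C' = v |: (C :\ u) ->
  forall d, d \in C :\ u -> d \in C'.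
Proof. by move=> _ _ -> d dD; rewrite in_setU1 dD orbT. Qed.

Lemma inv_contra (S : {set V}) (P : {set V} -> Prop) (t : V) :
  mobile_gp_set e S -> P S -> (forall C C', P C -> legal_move e C C' -> P C') ->
  (forall C, P C -> t \notin C) -> False.
Proof.
move=> [_ [k [C [C0 HC Hcov]]]] PS Hstep Ht.
have PC : forall i, i <= k -> P (C i).
  elim=> [|i IH] hi; first by rewrite C0.
  by apply: Hstep (HC i hi); apply: IH; apply: ltnW.
have [i ik ti] := Hcov t.
by have := Ht _ (PC i ik); rewrite ti.
Qed.

Lemma meet_le2 (D : {set V}) (v : V) :
  (forall a, a \in val v -> #|[set d in D | a \in val d]| <= 1) ->
  #|[set d in D | ~~ e d v]| <= 2.
Proof.
move=> H; have [a [b [ab E]]] := val2 v.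
have sub : [set d in D | ~~ e d v] \subset
           [set d in D | a \in val d] :|: [set d in D | b \in val d].
  apply/subsetP => d; rewrite !inE => /andP[dD /meetP [z zd]].
  by rewrite E !inE dD => /orP[] /eqP <-; rewrite zd ?orbT.
apply: leq_trans (subset_leq_card sub) _.
apply: leq_trans (leq_card_setU _ _).1 _.
have ha : #|[set d in D | a \in val d]| <= 1 by apply: H; rewrite E !inE eqxx.
have hb : #|[set d in D | b \in val d]| <= 1 by apply: H; rewrite E !inE eqxx orbT.
by move: ha hb; move: (#|_|) (#|_|) => x y; lia.
Qed.

Lemma ex_disj (D : {set V}) (v : V) : 3 <= #|D| ->
  (forall a, a \in val v -> #|[set d in D | a \in val d]| <= 1) ->
  exists2 d, d \in D & e d v.
Proof.
move=> hD H; have h2 := meet_le2 H.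
have : 0 < #|D :\: [set d in D | ~~ e d v]|.
  rewrite cardsD; have := subset_leq_card (subsetIr D [set d in D | ~~ e d v]).
  move: h2 hD; move: (#|_ :&: _|) (#|[set d in D | _]|) (#|D|) => m1 m2 m3; lia.
move=> /card_gt0P [d]; rewrite !inE negb_and negbK => /andP[/orP[dD'|edv] dD]; first by rewrite dD in dD'.
by exists d.
Qed.


Lemma ex_disj' (D : {set V}) (v : V) : 3 <= #|D| ->
  (forall a d1 d2, a \in val v -> d1 \in D -> d2 \in D -> a \in val d1 -> a \in val d2 -> d1 = d2) ->
  exists2 d, d \in D & e d v.
Proof.
move=> hD H; apply: ex_disj => // a av; apply: le1_uniq => d1 d2.
by rewrite !inE => /andP[d1D a1] /andP[d2D a2]; apply: (H a).
Qed.

Lemma card3 (T : finType) (a b c : T) : #|[set a; b; c]| <= 3.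
Proof.
apply: leq_trans (leq_card_setU _ _).1 _; rewrite cards1 cards2 addn1 ltnS.
by case: (a != b).
Qed.

Lemma meet_other (d1 d : V) x a : x \notin val d -> ~~ e d1 d ->
  val d1 = [set x; a] -> a \in val d.
Proof.
move=> xd /meetP [z z1 zd] E; move: z1; rewrite E !inE => /orP[] /eqP zE.
  by rewrite -zE zd in xd.
by rewrite -zE.
Qed.

Lemma intersect_common (D : {set V}) : (forall a b, a \in D -> b \in D -> ~~ e a b) ->
  4 <= #|D| -> exists x, forall d, d \in D -> x \in val d.
Proof.
move=> H hD; have [d1 [d2 [d12 d1D d2D]]] := two_elems (leq_trans (isT : 1 < 4) hD).
have /meetP [x x1 x2] := H d1 d2 d1D d2D.
exists x => d dD; apply: contraT => xd.
have [a [ax E1]] := other x1; have [b [bx E2]] := other x2.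
have ab : a != b.
  by apply/eqP => ab; move/eqP: d12; apply; apply: val_inj; rewrite E1 E2 ab.
have ad := meet_other xd (H d1 d d1D dD) E1.
have bd := meet_other xd (H d2 d d2D dD) E2.
have Ed := set2_eq (cardV d) ab ad bd.
have sub : D \subset [set d1; d2; d].
  apply/subsetP => d' d'D; rewrite !inE.
  case xd': (x \in val d').
    have [y [yx E']] := other xd'.
    have /meetP [z z1 z2] := H d' d d'D dD.
    move: z1 z2; rewrite E' Ed !inE => /orP[/eqP ->|/eqP ->].
      by move=> xab; move: xd; rewrite Ed !inE xab.
    case/orP => /eqP yE.
      have -> : d' = d1 by apply: val_inj; rewrite E' E1 yE.
      by rewrite eqxx.
    have -> : d' = d2 by apply: val_inj; rewrite E' E2 yE.
    by rewrite eqxx orbT.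
  have xd'' : x \notin val d' by rewrite xd'.
  have a' := meet_other xd'' (H d1 d' d1D d'D) E1.
  have b' := meet_other xd'' (H d2 d' d2D d'D) E2.
  have -> : d' = d by apply: val_inj; rewrite Ed (set2_eq (cardV d') ab a' b').
  by rewrite eqxx orbT.
by have := leq_trans hD (leq_trans (subset_leq_card sub) (card3 _ _ _)).
Qed.


Lemma star_nomove (S S' : {set V}) x : 5 <= #|S| -> (forall s, s \in S -> x \in val s) ->
  legal_move e S S' -> False.
Proof.
move=> hS Hx [u [v [uS vS euv E gS']]].
have xv : x \notin val v by apply/negP => xv; move/djP: euv => /(_ x (Hx u uS) xv).
have hD : 4 <= #|S :\ u| by rewrite cardD1E //; move: hS; move: (#|S|) => m; lia.
have Hu : forall a d1 d2, a \in val v -> d1 \in S :\ u -> d2 \in S :\ u ->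
    a \in val d1 -> a \in val d2 -> d1 = d2.
  move=> a d1 d2 av; rewrite !in_setD1 => /andP[_ d1S] /andP[_ d2S] a1 a2.
  have xa : x != a by apply: contraNneq xv => ->.
  exact: veq xa (Hx _ d1S) a1 (Hx _ d2S) a2.
have [d1 d1D ed1] := ex_disj' (ltnW hD) Hu.
have hD' : 3 <= #|S :\ u :\ d1| by rewrite cardD1E //; move: hD; move: (#|S :\ u|) => m; lia.
have [d2 d2D ed2] := ex_disj' hD' (fun a d d' av dD d'D => Hu a d d' av
   (subsetP (subD1set _ _) d dD) (subsetP (subD1set _ _) d' d'D)).
move: d2D; rewrite in_setD1 => /andP[d21 d2D].
apply: (gp_bad gS' (a := d1) (b := v) (c := d2)).
- by rewrite E in_setU1 d1D orbT.
- by rewrite E in_setU1 eqxx.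
- by rewrite E in_setU1 d2D orbT.
- by rewrite eq_sym.
split; try by rewrite e_sym.
move: d1D d2D; rewrite !in_setD1 => /andP[_ d1S] /andP[_ d2S].
by apply/negP => /djP /(_ x (Hx _ d1S) (Hx _ d2S)).
Qed.

Lemma case_c (S : {set V}) : mobile_gp_set e S -> 5 <= #|S| ->
  (forall a b, a \in S -> b \in S -> ~~ e a b) -> False.
Proof.
move=> mS hS H.
have [x Hx] := intersect_common H (ltnW hS).
have : 1 < #|~: [set x]|.
  have := cardsC [set x]; rewrite cards1 card_ord; move: (#|_|) => m; lia.
move=> /vin [t ht].
have xt : x \notin val t.
  by apply/negP => /(subsetP ht); rewrite !inE eqxx.
apply: (inv_contra (P := fun C => C = S) (t := t) mS) => //.
  by move=> C C' -> /(star_nomove hS Hx).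
move=> C ->; apply/negP => /Hx; exact/negP.
Qed.


Lemma block (C : {set V}) p q r : gp_set e C -> p \in C -> q \in C -> r \in C -> e p q ->
  (val r \subset val p :|: val q) \/ (e r p /\ e r q).
Proof.
move=> gC pC qC rC epq.
have subp : val p \subset val p :|: val q by apply: subsetUl.
have subq : val q \subset val p :|: val q by apply: subsetUr.
case erp: (e r p).
  case erq: (e r q); first by right.
  have [->|rq] := eqVneq r q; first by left.
  exfalso; apply: (gp_bad gC rC pC qC rq); split => //; first by rewrite e_sym.
  by rewrite erq.
have [->|rp] := eqVneq r p; first by left.
case erq: (e r q).
  exfalso; apply: (gp_bad gC rC qC pC rp); split => //; first by rewrite e_sym.
  - by rewrite e_sym.
  - by rewrite erp.
left; have /meetP [z1 z1r z1p] : ~~ e r p by rewrite erp.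
have /meetP [z2 z2r z2q] : ~~ e r q by rewrite erq.
have z12 : z1 != z2 by apply/eqP => E; move/djP: epq => /(_ z1 z1p); rewrite E => /(_ z2q).
rewrite (set2_eq (cardV r) z12 z1r z2r) subUset !sub1set !inE z1p z2q orbT.
by [].
Qed.

Lemma mixed (C : {set V}) p q c : gp_set e C -> p \in C -> q \in C -> c \in C -> e p q ->
  val c \subset val p :|: val q -> c != p -> c != q ->
  forall r, r \in C -> val r \subset val p :|: val q.
Proof.
move=> gC pC qC cC epq cW cp cq r rC.
case: (block gC pC qC rC epq) => // [[erp erq]].
exfalso.
have erc : e r c.
  apply/djP => z zr /(subsetP cW); rewrite inE => /orP[] zpq.
    by move/djP: erp => /(_ z zr zpq).
  by move/djP: erq => /(_ z zr zpq).
have npc : ~~ e p c.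
  apply/negP => epc; move/eqP: cq; apply; apply: val_inj; apply/eqP.
  rewrite eqEcard !cardV leqnn andbT; apply/subsetP => z zc.
  move: (subsetP cW z zc); rewrite inE => /orP[zp|//].
  by move/djP: epc => /(_ z zp zc).
apply: (gp_bad gC pC rC cC); first by rewrite eq_sym.
by split => //; rewrite e_sym.
Qed.

Lemma mixed_sub (C : {set V}) p q r1 r2 : gp_set e C -> p \in C -> q \in C ->
  r1 \in C -> r2 \in C -> e p q -> r1 != r2 -> ~~ e r1 r2 ->
  forall r, r \in C -> val r \subset val p :|: val q.
Proof.
move=> gC pC qC r1C r2C epq r12 nr12.
have K : forall r, r \in C -> (val r \subset val p :|: val q) && (r != p) && (r != q)
    \/ (r = p \/ r = q) \/ (e r p /\ e r q).
  move=> r rC; have [->|rp] := eqVneq r p; first by right; left; left.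
  have [->|rq] := eqVneq r q; first by right; left; right.
  case: (block gC pC qC rC epq) => [s|h]; last by right; right.
  by left; rewrite s; apply/andP; split.
have Hc : forall c, c \in C -> (val c \subset val p :|: val q) && (c != p) && (c != q) ->
    forall r, r \in C -> val r \subset val p :|: val q.
  by move=> c cC /andP[/andP[cW cp] cq]; apply: mixed cW cp cq.
case: (K r1 r1C) => [h1|[[E1|E1]|[e1p e1q]]]; first exact: Hc h1;
case: (K r2 r2C) => [h2|[[E2|E2]|[e2p e2q]]]; try exact: Hc h2;
  rewrite ?E1 ?E2 ?eqxx ?e_irr ?epq ?(e_sym q p) ?epq ?e1p ?e1q ?e2p ?e2q
   ?(e_sym p r2) ?(e_sym q r2) ?e2p ?e2q in r12 nr12 => //.
exfalso; apply: (gp_bad gC r1C pC r2C r12); split => //; by rewrite e_sym.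
Qed.


Lemma k4_step (C C' : {set V}) (W : {set 'I_n}) : #|W| = 4 -> 5 <= #|C| ->
  (forall c, c \in C -> val c \subset W) -> legal_move e C C' ->
  forall c, c \in C' -> val c \subset W.
Proof.
move=> cW hC HC [u [v [uC vC euv E gC']]].
have hD : 4 <= #|C :\ u| by rewrite cardD1E //; move: hC; move: (#|C|) => m; lia.
have inC' : forall d, d \in C :\ u -> d \in C' by move=> d dD; rewrite E in_setU1 dD orbT.
have HD : forall d, d \in C :\ u -> val d \subset W.
  by move=> d; rewrite in_setD1 => /andP[_ /HC].
case: (boolP [exists p, exists q, [&& p \in C :\ u, q \in C :\ u & e p q]]); last first.
  rewrite negb_exists => /forallP Hn; exfalso.
  have Hi : forall a b, a \in C :\ u -> b \in C :\ u -> ~~ e a b.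
    move=> a b aD bD; move: (Hn a); rewrite negb_exists => /forallP /(_ b).
    by rewrite aD bD.
  have [x Hx] := intersect_common Hi hD.
  have /card_gt0P [d0 d0D] : 0 < #|C :\ u| by move: hD; move: (#|_|) => m; lia.
  have xW : x \in W by apply: (subsetP (HD d0 d0D)); apply: Hx.
  have xW' : x \notin W :\ x by rewrite in_setD1 eqxx.
  have sub : C :\ u \subset starS x (W :\ x).
    apply/subsetP => d dD; rewrite inE Hx //= setD1K //; exact: HD.
  have := subset_leq_card sub; rewrite card_star // (cardD1E xW) cW.
  by move: hD; move: (#|C :\ u|) => m; lia.
move=> /existsP [p /existsP [q /and3P [pD qD epq]]].
have W2 : val p :|: val q = W.
  apply/eqP; rewrite eqEcard subUset (HD p pD) (HD q qD) cW cardsU !cardV.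
  by rewrite (_ : val p :&: val q = set0) ?cards0 //; apply: disjoint_setI0.
have : 0 < #|C :\ u :\ p :\ q|.
  have qD' : q \in C :\ u :\ p by rewrite in_setD1 qD andbT eq_sym (e_neq epq).
  rewrite (cardD1E qD') (cardD1E pD).
  by move: hD; move: (#|C :\ u|) => m; lia.
move=> /card_gt0P [t]; rewrite !in_setD1 => /and4P[tq tp tu tC].
have tD : t \in C :\ u by rewrite in_setD1 tu tC.
move=> c; rewrite E in_setU1 => /orP[/eqP ->|cD]; last exact: HD.
have tW : val t \subset val p :|: val q by rewrite W2; apply: HD.
have vC' : v \in C' by rewrite E in_setU1 eqxx.
rewrite -W2; exact: (mixed gC' (inC' p pD) (inC' q qD) (inC' t tD) epq tW tp tq vC').
Qed.

Lemma case_b (S : {set V}) p q r1 r2 : mobile_gp_set e S -> 5 <= #|S| ->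
  p \in S -> q \in S -> r1 \in S -> r2 \in S -> e p q -> r1 != r2 -> ~~ e r1 r2 -> False.
Proof.
move=> mS hS pS qS r1S r2S epq r12 nr12.
have gS := mS.1.
pose W := val p :|: val q.
have cW : #|W| = 4.
  rewrite /W cardsU !cardV.
  by rewrite (_ : val p :&: val q = set0) ?cards0 //; apply: disjoint_setI0.
have HS := mixed_sub gS pS qS r1S r2S epq r12 nr12.
have : 0 < #|~: W| by have := cardsC W; rewrite cW card_ord; move: (#|~: W|) => m; lia.
move=> /card_gt0P [z]; rewrite inE => zW.
have [a [b [ab Ep]]] := val2 p.
have aW : a \in W by rewrite /W Ep !inE eqxx.
have az : a != z by apply: contraNneq zW => <-.
have [t Et] := ex_v az.
apply: (inv_contra (P := fun C => #|C| = #|S| /\ forall c, c \in C -> val c \subset W)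
          (t := t) mS).
- by split.
- move=> C C' [cC HC] L; split; first by rewrite (legal_card L).
  by apply: (k4_step cW _ HC L); rewrite cC.
move=> C [_ HC]; apply/negP => /HC /subsetP /(_ z).
rewrite Et !inE eqxx orbT => /(_ isT) zW'.
by move: zW; rewrite /W inE zW'.
Qed.


Definition PA (S : {set V}) := [set p : V | (p \in S) || [disjoint val p & cov S]].

Lemma match_inv_step (S C C' : {set V}) : matching S -> matching C -> 5 <= #|C| ->
  n <= 2 * #|C| + 2 -> C \subset PA S -> legal_move e C C' ->
  matching C' /\ C' \subset PA S.
Proof.
move=> MS MC hC hn CP [u [v [uC vC euv E gC']]].
have hD : 3 <= #|C :\ u| by rewrite cardD1E //; move: hC; move: (#|C|) => m; lia.
have inC' : forall d, d \in C :\ u -> d \in C' by move=> d dD; rewrite E in_setU1 dD orbT.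
have vC' : v \in C' by rewrite E in_setU1 eqxx.
have Hu : forall a d1 d2, a \in val v -> d1 \in C :\ u -> d2 \in C :\ u ->
    a \in val d1 -> a \in val d2 -> d1 = d2.
  move=> a d1 d2 av; rewrite !in_setD1 => /andP[_ d1C] /andP[_ d2C] a1 a2.
  apply/eqP; apply: contraT => d12.
  by move/djP: (MC d1 d2 d1C d2C d12) => /(_ a a1 a2).
have [d0 d0D ed0] := ex_disj' hD Hu.
have evD : forall d, d \in C :\ u -> e d v.
  move=> d dD; apply: contraT => ndv; exfalso.
  have d0d : d0 != d by apply: contraNneq ndv => <-.
  have dv : d != v by apply: contraNneq vC => <-; move: dD; rewrite in_setD1 => /andP[].
  move: (d0D) (dD); rewrite !in_setD1 => /andP[_ d0C] /andP[_ dC].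
  apply: (gp_bad gC' (inC' d dD) (inC' d0 d0D) vC' dv); split => //.
  exact: MC.
have evC : forall c, c \in C -> e c v.
  move=> c cC; have [->|cu] := eqVneq c u; first by [].
  by apply: evD; rewrite in_setD1 cu cC.
have MC' : matching C'.
  move=> a b; rewrite E !in_setU1 !in_setD1 => /orP[/eqP ->|/andP[_ aC]] /orP[/eqP ->|/andP[_ bC]].
  - by rewrite eqxx.
  - by move=> _; rewrite e_sym; apply: evC.
  - by move=> _; apply: evC.
  - by apply: MC.
split => //; apply/subsetP => c1; rewrite E in_setU1 => /orP[/eqP ->|]; last first.
  by rewrite in_setD1 => /andP[_ /(subsetP CP)].
rewrite inE; case: (boolP [disjoint val v & cov S]) => [_|/meetP [z zv /covP [s0 s0S zs0]]].
  by rewrite orbT.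
have s0C : s0 \notin C.
  by apply/negP => s0C; move/djP: (evC s0 s0C) => /(_ z zs0 zv).
have es0 : forall c, c \in C -> e c s0.
  move=> c cC; move: (subsetP CP c cC); rewrite inE => /orP[cS|dj].
    by apply: MS => //; apply: contraNneq s0C => <-.
  apply/djP => z' z'c z's0; move/djP: dj => /(_ z' z'c); apply.
  exact: in_cov s0S z's0.
have comp : forall w : V, (forall c, c \in C -> e c w) -> val w = ~: cov C.
  move=> w ew; apply/eqP; rewrite eqEcard cardV.
  have := cardsC (cov C); rewrite card_ord cov_card //.
  move=> hc; have -> : #|~: cov C| <= 2 by rewrite -(leq_add2l (2 * #|C|)) hc.
  rewrite andbT; apply/subsetP => y yw; rewrite inE; apply/negP => /covP [c cC yc].
  by move/djP: (ew c cC) => /(_ y yc yw).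
have -> : v = s0 by apply: val_inj; rewrite (comp v evC) (comp s0 es0).
by rewrite s0S.
Qed.

Lemma case_a (S : {set V}) : mobile_gp_set e S -> matching S -> 5 <= #|S| ->
  n <= 2 * #|S| + 2 -> False.
Proof.
move=> mS MS hS hn.
have [s1 [s2 [s12 s1S s2S]]] := two_elems (leq_trans (isT : 1 < 5) hS).
have e12 := MS s1 s2 s1S s2S s12.
have [a [a' [_ E1]]] := val2 s1; have [c [c' [_ E2]]] := val2 s2.
have a1 : a \in val s1 by rewrite E1 !inE eqxx.
have c2 : c \in val s2 by rewrite E2 !inE eqxx.
have ac : a != c by apply/eqP => ac; move/djP: e12 => /(_ a a1); rewrite ac => /(_ c2).
have [t Et] := ex_v ac.
apply: (inv_contra (P := fun C => [/\ matching C, #|C| = #|S| & C \subset PA S])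
          (t := t) mS).
- split => //; apply/subsetP => p pS; by rewrite inE pS.
- move=> C C' [MC cC CP] L.
  have h1 : 5 <= #|C| by rewrite cC.
  have h2 : n <= 2 * #|C| + 2 by rewrite cC.
  have [MC' CP'] := match_inv_step MS MC h1 h2 CP L.
  by split => //; rewrite (legal_card L).
move=> C [_ _ CP]; apply/negP => /(subsetP CP); rewrite inE => /orP[tS|].
  have at' : a \in val t by rewrite Et !inE eqxx.
  have ct : c \in val t by rewrite Et !inE eqxx orbT.
  have [ts1|ts1] := eqVneq t s1.
    by move/djP: e12 => /(_ c); rewrite -ts1 => /(_ ct c2).
  by move/djP: (MS t s1 tS s1S ts1) => /(_ a at' a1).
move/djP => /(_ a); rewrite Et !inE eqxx => /(_ isT).
by apply; apply: in_cov s1S a1.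
Qed.


Lemma lower_bound : exists S : {set V}, mobile_gp_set e S /\ #|S| = maxn 4 ((n - 3) %/ 2).
Proof.
case: (leqP ((n - 3) %/ 2) 4) => h.
  exact: mobile_star.
apply: mobile_matching.
  by move: h; move: ((n - 3) %/ 2) => m; lia.
have := leq_trunc_div (n - 3) 2; move: ((n - 3) %/ 2) => m; lia.
Qed.

Lemma upper_bound (S : {set V}) : mobile_gp_set e S -> #|S| <= maxn 4 ((n - 3) %/ 2).
Proof.
move=> mS; case: (leqP #|S| 4) => hs; first by apply: leq_trans hs (leq_maxl _ _).
have hn : 2 * #|S| + 3 <= n.
  rewrite leqNgt; apply/negP => hn'.
  have hn2 : n <= 2 * #|S| + 2 by move: hn'; move: (#|S|) => m; lia.
  case: (boolP [forall a, forall b, [&& a \in S, b \in S & a != b] ==> e a b]) => [HM|].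
    apply: (case_a mS _ hs hn2) => a b aS bS ab.
    by move: HM => /forallP /(_ a) /forallP /(_ b); rewrite aS bS ab.
  rewrite negb_forall => /existsP [r1]; rewrite negb_forall => /existsP [r2].
  rewrite negb_imply => /andP[/and3P[r1S r2S r12] nr12].
  case: (boolP [exists p, exists q, [&& p \in S, q \in S & e p q]]).
    move=> /existsP [p /existsP [q /and3P [pS qS epq]]].
    exact: (case_b mS hs pS qS r1S r2S epq r12 nr12).
  rewrite negb_exists => /forallP Hn.
  apply: (case_c mS hs) => a b aS bS.
  by move: (Hn a); rewrite negb_exists => /forallP /(_ b); rewrite aS bS.
apply: leq_trans (leq_maxr _ _).
have := leq_trunc_div (n - 3) 2; rewrite leq_divRL //.
by move: hn; move: (#|S|) => m; lia.
Qed.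

End K.

Theorem theorem3p1 (n : nat) : 5 <= n ->
  is_mob (@kneser_adj n) (maxn 4 ((n - 3) %/ 2)).
Proof.
move=> n5; split; first exact: lower_bound.
by move=> S; apply: upper_bound.
Qed.
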